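(* Let $n\geq 4$ and $G\in\mathcal{GAQ}_n$. (i) If $(a,b)$ is an edge of $G$, $A$ is the set of neighbors of $a$ and $B$ the set of neighbors of $b$, then $|(A\setminus\{b\})\setminus(B\setminus\{a\})|\geq 2$. (ii) If $a,b$ are distinct nonadjacent vertices of $G$ with neighbor sets $A$ and $B$ respectively, then $|A\setminus B|\geq 2$.
   Context: The $n$-dimensional augmented cube $AQ_n$ ($n\geq 1$) has vertex set all binary strings $u_1u_2\cdots u_n$. $AQ_1\cong K_2$ on vertices $0,1$. For $n\geq 2$, $AQ_n$ consists of a copy $AQ^0_{n-1}$ of $AQ_{n-1}$ with $0$ prefixed to every label and a copy $AQ^1_{n-1}$ with $1$ prefixed, plus the following edges: $0u_1\cdots u_{n-1}$ is adjacent to $1v_1\cdots v_{n-1}$ iff either $u_i=v_i$ for all $i$ (cross edge) or $u_i\neq v_i$ for all $i$ (complement edge). $AQ_n$ is $(2n-1)$-regular. Generalized augmented cubes: $\mathcal{GAQ}_4=\{AQ_4\}$; for $n\geq 5$, $\mathcal{GAQ}_n$ consists of all graphs $(V_1\cup V_2, E_1\cup E_2\cup M_1\cup M_2)$ where $(V_1,E_1),(V_2,E_2)$ are (vertex-disjoint copies of, possibly identical) graphs in $\mathcal{GAQ}_{n-1}$ and $M_1,M_2$ are edge-disjoint perfect matchings between $V_1$ and $V_2$. *)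

(* Defs.v *)
From mathcomp Require Import all_boot.
Set Implicit Arguments. Unset Strict Implicit. Unset Printing Implicit Defensive.

(* Adjacency in the augmented cube AQ_n on bit strings u_1 ... u_n
   (head of the list = u_1 = the prefixed bit), following the recursive
   definition: AQ_1 = K_2; in AQ_n, 0u ~ 0v iff u ~ v in AQ_{n-1}, same for 1,
   and 0u ~ 1v iff u = v (cross edge) or u_i <> v_i for all i (complement edge). *)
Fixpoint aq_adj (u v : seq bool) : bool :=
  match u, v with
  | [:: a], [:: b] => a != b
  | a :: u', b :: v' =>
      if a == b then aq_adj u' v'
      else (u' == v') || all2 (fun x y => x != y) u' v'
  | _, _ => false
  end.

Definition AQ4_rel : rel (4.-tuple bool) := fun u v => aq_adj u v.

(* Edge relation of the graph built from G1 = (T1,e1), G2 = (T2,e2) and two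
   perfect matchings M1, M2 : V1 -> V2 (given as bijections). *)
Definition join_rel (T1 T2 : finType) (e1 : rel T1) (e2 : rel T2)
  (M1 M2 : T1 -> T2) : rel (T1 + T2) :=
  fun x y =>
    match x, y with
    | inl a, inl b => e1 a b
    | inr a, inr b => e2 a b
    | inl a, inr b => (M1 a == b) || (M2 a == b)
    | inr a, inl b => (M1 b == a) || (M2 b == a)
    end.

(* isGAQ n T e : the graph (T, e) belongs to the class GAQ_n
   (closed under isomorphism, i.e. we consider copies of the graphs). *)
Inductive isGAQ : nat -> forall T : finType, rel T -> Prop :=
  | GAQ_base : isGAQ 4 AQ4_rel
  | GAQ_step (n : nat) (T1 T2 : finType) (e1 : rel T1) (e2 : rel T2)
      (M1 M2 : T1 -> T2) :
      4 <= n -> isGAQ n e1 -> isGAQ n e2 ->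
      bijective M1 -> bijective M2 -> (forall x, M1 x != M2 x) ->
      isGAQ n.+1 (join_rel e1 e2 M1 M2)
  | GAQ_iso (n : nat) (T T' : finType) (e : rel T) (e' : rel T') (f : T -> T') :
      isGAQ n e -> bijective f -> (forall x y, e' (f x) (f y) = e x y) ->
      isGAQ n e'.

(* Main.v *)
Require Import Defs.
From mathcomp Require Import all_boot.
Definition B2 := [:: false; true].
Definition cons2 (l : seq (seq bool)) := [seq x :: t | x <- B2, t <- l].
Definition L : seq (seq bool) := cons2 (cons2 (cons2 (cons2 [:: [::]]))).
Lemma L_uniq : uniq L. Proof. by []. Qed.
Lemma L_size s : s \in L -> size s == 4.
Proof. have : all (fun t => size t == 4) L by []. by move/allP; apply. Qed.
Lemma L_mem s : size s == 4 -> s \in L.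
Proof.
by case: s => [|x0 [|x1 [|x2 [|x3 [|x4 s]]]]] //= _; case: x0; case: x1; case: x2; case: x3.
Qed.
Lemma perm_L : perm_eq (map (@tval 4 bool) (enum {: 4.-tuple bool})) L.
Proof.
apply: uniq_perm; first by rewrite (map_inj_uniq val_inj) enum_uniq.
  exact: L_uniq.
move=> t; apply/idP/idP.
  by case/mapP=> x _ ->; apply: L_mem; rewrite size_tuple.
move=> /L_size/eqP H; apply/mapP; exists (Tuple (introT eqP H)); by rewrite ?mem_enum.
Qed.
Lemma card_L (P : pred (seq bool)) :
  #|[set x : 4.-tuple bool | P (val x)]| = count P L.
Proof.
rewrite -(permP perm_L) count_map cardsE cardE /enum_mem size_filter.
by rewrite count_filter; apply: eq_count => x; rewrite !inE ?andbT.
Qed.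

Definition Inv {T : finType} (e : rel T) :=
  [/\ forall a, 4 <= #|[set x | e a x]|,
      forall a b, e a b -> 2 <= #|[set x | e a x && (x != b) && ~~ (e b x && (x != a))]| &
      forall a b, a != b -> ~~ e a b -> 2 <= #|[set x | e a x && ~~ e b x]| ].

Lemma tupL (a : 4.-tuple bool) : val a \in L.
Proof. by apply: L_mem; rewrite size_tuple. Qed.

Lemma chk1 : all (fun a => 4 <= count (aq_adj a) L) L. Proof. by []. Qed.
Lemma chk2 : all (fun a => all (fun b => aq_adj a b ==>
   (2 <= count (fun s => aq_adj a s && (s != b) && ~~ (aq_adj b s && (s != a))) L)) L) L.
Proof. by []. Qed.
Lemma chk3 : all (fun a => all (fun b => (a != b) && ~~ aq_adj a b ==>
   (2 <= count (fun s => aq_adj a s && ~~ aq_adj b s) L)) L) L.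
Proof. by []. Qed.

Lemma Inv_base : Inv AQ4_rel.
Proof.
split.
- move=> a; rewrite (_ : [set x | AQ4_rel a x] = [set x : 4.-tuple bool | aq_adj a (val x)]);
    last by apply/setP => x; rewrite !inE.
  by rewrite card_L; move/allP: chk1; apply; apply: tupL.
- move=> a b ab.
  rewrite (_ : #|[set x | _]| = count
     (fun s => aq_adj a s && (s != b) && ~~ (aq_adj b s && (s != a))) L);
    last by rewrite -card_L; congr #|_|; apply/setP => x; rewrite !inE.
  move/allP: chk2 => /(_ _ (tupL a)) /allP /(_ _ (tupL b)).
  by move: ab; rewrite /AQ4_rel => ->.
- move=> a b nab nab'.
  rewrite (_ : #|[set x | _]| = count
     (fun s => aq_adj a s && ~~ aq_adj b s) L);
    last by rewrite -card_L; congr #|_|; apply/setP => x; rewrite !inE.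
  move/allP: chk3 => /(_ _ (tupL a)) /allP /(_ _ (tupL b)).
  by move: nab nab'; rewrite /AQ4_rel -val_eqE => -> ->.
Qed.

Lemma card_sub (T : finType) (P Q : pred T) :
  (forall x, P x -> Q x) -> #|[set x | P x]| <= #|[set x | Q x]|.
Proof.
move=> H; apply: subset_leq_card; apply/subsetP => x; rewrite !inE; exact: H.
Qed.

Lemma card_inl (T1 T2 : finType) (P : pred (T1 + T2)) :
  #|[set y | P (inl y)]| <= #|[set x | P x]|.
Proof.
have inj : injective (@inl T1 T2) by move=> ?? [].
rewrite -(card_imset _ inj); apply: subset_leq_card; apply/subsetP => x.
by case/imsetP => y; rewrite inE => Py ->; rewrite inE.
Qed.

Lemma card_inr (T1 T2 : finType) (P : pred (T1 + T2)) :
  #|[set y | P (inr y)]| <= #|[set x | P x]|.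
Proof.
have inj : injective (@inr T1 T2) by move=> ?? [].
rewrite -(card_imset _ inj); apply: subset_leq_card; apply/subsetP => x.
by case/imsetP => y; rewrite inE => Py ->; rewrite inE.
Qed.

Lemma card_D2 (T : finType) (S : {set T}) c d (P : pred T) :
  (forall y, y \in S -> y != c -> y != d -> P y) -> #|S| - 2 <= #|[set y | P y]|.
Proof.
move=> H.
have : #|S :\ c :\ d| <= #|[set y | P y]|.
  apply: subset_leq_card; apply/subsetP => y; rewrite !inE => /and3P [yd yc yS].
  exact: H.
rewrite (cardsD1 c S) (cardsD1 d (S :\ c)).
move: (c \in S) (d \in S :\ c) => [] [] h /=; apply: leq_trans h;
  rewrite ?add0n ?add1n ?subn2 ?subSS //= ?leq_subr ?leq_pred //; case: #|_| => //= [] [] // k; rewrite ltnW // ltnW.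
Qed.

Lemma card_f (T T' : finType) (f : T -> T') (P : pred T') :
  bijective f -> #|[set x | P x]| = #|[set x | P (f x)]|.
Proof.
move=> fb; have [g fg gf] := fb.
rewrite -(card_imset _ (bij_inj fb)); apply: eq_card => x'; rewrite inE.
apply/idP/imsetP.
  by move=> Px; exists (g x'); rewrite ?inE gf.
by case=> x; rewrite inE => Px ->.
Qed.

Arguments card_f {T T' f} P.
Arguments card_inl {T1 T2} P.
Arguments card_inr {T1 T2} P.
Arguments card_sub {T} P Q.
Arguments card_D2 {T} S c d P.

Lemma Inv_iso (T T' : finType) (e : rel T) (e' : rel T') (f : T -> T') :
  Inv e -> bijective f -> (forall x y, e' (f x) (f y) = e x y) -> Inv e'.
Proof.
move=> [H1 H2 H3] fb He; have [g fg gf] := fb.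
have fi := bij_inj fb.
split.
- move=> a'; rewrite -(gf a') (card_f _ fb).
  rewrite (_ : #|_| = #|[set x | e (g a') x]|) ?H1 //.
  by apply: eq_card => x; rewrite !inE He.
- move=> a' b'; rewrite -(gf a') -(gf b') He => /H2.
  rewrite (card_f _ fb) (_ : #|[set x | _]| = #|[set x | e (g a') x && (x != g b') && ~~ (e (g b') x && (x != g a'))]|) //.
  by apply: eq_card => x; rewrite !inE !He !(inj_eq fi).
- move=> a' b'; rewrite -(gf a') -(gf b') He (inj_eq fi) => ne /(H3 _ _ ne).
  rewrite (card_f _ fb) (_ : #|[set x | _]| = #|[set x | e (g a') x && ~~ e (g b') x]|) //.
  by apply: eq_card => x; rewrite !inE !He.
Qed.

Lemma Inv_join (T1 T2 : finType) (e1 : rel T1) (e2 : rel T2) (M1 M2 : T1 -> T2) :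
  Inv e1 -> Inv e2 -> bijective M1 -> bijective M2 -> Inv (join_rel e1 e2 M1 M2).
Proof.
move=> [A1 A2 A3] [B1 B2 B3] b1 b2.
have [g1 f1 h1] := b1; have [g2 f2 h2] := b2.
have eM1 : forall y b, (M1 y == b) = (y == g1 b).
  by move=> y b; apply/eqP/eqP => [<-|->].
have eM2 : forall y b, (M2 y == b) = (y == g2 b).
  by move=> y b; apply/eqP/eqP => [<-|->].
split.
- case=> a.
  + apply: leq_trans (card_inl (join_rel e1 e2 M1 M2 (inl a))); exact: A1.
  + apply: leq_trans (card_inr (join_rel e1 e2 M1 M2 (inr a))); exact: B1.
- case=> a [] b /= ab.
  + apply: leq_trans (A2 _ _ ab) _; apply: leq_trans (card_inl _).
    by apply: card_sub => y /=.
  + apply: leq_trans (card_inl _).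
    apply: (leq_trans (_ : 2 <= #|[set y | e1 a y]| - 2)); first by rewrite (leq_sub2r 2 (A1 a)).
    apply: (card_D2 _ (g1 b) (g2 b)) => y; rewrite inE /= eM1 eM2 => -> /negbTE -> /negbTE -> //.
  + apply: leq_trans (card_inr _).
    apply: (leq_trans (_ : 2 <= #|[set y | e2 a y]| - 2)); first by rewrite (leq_sub2r 2 (B1 a)).
    apply: (card_D2 _ (M1 b) (M2 b)) => y; rewrite inE /= => -> H1 H2; rewrite (eq_sym (M1 b)) (eq_sym (M2 b)) (negbTE H1) (negbTE H2).
    by [].
  + apply: leq_trans (B2 _ _ ab) _; apply: leq_trans (card_inr _).
    by apply: card_sub => y /=.
- case=> a [] b /= ne nab.
  + apply: leq_trans (A3 _ _ ne nab) _; apply: leq_trans (card_inl _).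
    by apply: card_sub => y /=.
  + apply: leq_trans (card_inl _).
    apply: (leq_trans (_ : 2 <= #|[set y | e1 a y]| - 2)); first by rewrite (leq_sub2r 2 (A1 a)).
    apply: (card_D2 _ (g1 b) (g2 b)) => y; rewrite inE /= eM1 eM2 => -> /negbTE -> /negbTE -> //.
  + apply: leq_trans (card_inr _).
    apply: (leq_trans (_ : 2 <= #|[set y | e2 a y]| - 2)); first by rewrite (leq_sub2r 2 (B1 a)).
    apply: (card_D2 _ (M1 b) (M2 b)) => y; rewrite inE /= => -> H1 H2; rewrite (eq_sym (M1 b)) (eq_sym (M2 b)) (negbTE H1) (negbTE H2).
    by [].
  + apply: leq_trans (B3 _ _ ne nab) _; apply: leq_trans (card_inr _).
    by apply: card_sub => y /=.
Qed.

Lemma Inv_all n (T : finType) (e : rel T) : isGAQ n e -> Inv e.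
Proof.
elim=> {n T e}.
- exact: Inv_base.
- move=> n T1 T2 e1 e2 M1 M2 _ _ I1 _ I2 b1 b2 _; exact: Inv_join.
- move=> n T T' e e' f _ I fb He; exact: Inv_iso I fb He.
Qed.

Theorem lemma3p3 (n : nat) (T : finType) (e : rel T) :
  4 <= n -> isGAQ n e ->
  (forall a b : T, e a b ->
     2 <= #|([set x | e a x] :\ b) :\: ([set x | e b x] :\ a)|) /\
  (forall a b : T, a != b -> ~~ e a b ->
     2 <= #|[set x | e a x] :\: [set x | e b x]|).
Proof.
move=> _ /Inv_all [_ H2 H3]; split.
- move=> a b ab; apply: leq_trans (H2 _ _ ab) _; apply: subset_leq_card.
  by apply/subsetP => x; rewrite !inE; case: (e a x) (e b x) (x == a) (x == b) => [] [] [] [].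
- move=> a b ne nab; apply: leq_trans (H3 _ _ ne nab) _; apply: subset_leq_card.
  by apply/subsetP => x; rewrite !inE; case: (e a x) (e b x) => [] [].
Qed.
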